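(* Let $X$ be a Baire space and $\sigma : X\to X$ a homeomorphism, inducing the automorphism $\widetilde{\sigma}(f) = f\circ\sigma^{-1}$ of $C(X)$. Let $A$ be a subalgebra of $C(X)$ invariant under $\widetilde{\sigma}$ and $\widetilde{\sigma}^{-1}$, which separates the points of $X$ and is such that for every non-empty open set $U\subseteq X$ there is a non-zero $f\in A$ vanishing on $X\setminus U$. Then $A$ is a maximal abelian subalgebra of $A\rtimes_{\widetilde{\sigma}}\mathbb{Z}$ if and only if the set $\mathrm{Per}^\infty(X) = \{x\in X : \sigma^n(x)\neq x \text{ for all } n\in\mathbb{Z}\setminus\{0\}\}$ of non-periodic points is dense in $X$.
   Context: $C(X)$ is the algebra of continuous complex-valued functions on $X$. The crossed product $A \rtimes_{\widetilde{\sigma}} \mathbb{Z}$ is the set of finitely supported functions $\mathbb{Z}\to A$, written $\sum_n f_n\delta^n$, with pointwise linear operations and multiplication determined by $(f_n\delta^n)*(g_m\delta^m)=f_n\,\widetilde{\sigma}^n(g_m)\,\delta^{n+m}$; $A$ is embedded as $\{f_0\delta^0\}$. *)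

(* Defs.v *)
From HB Require Import structures.
From mathcomp Require Import all_boot all_order all_algebra.
From mathcomp Require Import all_classical all_reals all_analysis.
From mathcomp Require Import complex.
Set Implicit Arguments. Unset Strict Implicit. Unset Printing Implicit Defensive.
Import Order.TTheory GRing.Theory Num.Theory.
Import numFieldTopology.Exports.
Local Open Scope ring_scope.
Local Open Scope classical_set_scope.

Definition baire_space (X : topologicalType) : Prop :=
  forall F : (set X)^nat, (forall i, open (F i) /\ dense (F i)) ->
    dense (\bigcap_i (F i)).

(* Continuity of a complex-valued function: C carries the product topology
   of R x R, i.e. real and imaginary parts are continuous. *)
Definition ccontinuous (R : realType) (X : topologicalType) (f : X -> R[i]) : Prop :=
  continuous (fun x => complex.Re (f x) : R) /\ continuous (fun x => complex.Im (f x) : R).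

Definition zpow (X : Type) (sigma sigmai : X -> X) (n : int) : X -> X :=
  match n with
  | Posz k => iter k sigma
  | Negz k => iter k.+1 sigmai
  end.

Definition sigt_pow (R : realType) (X : Type) (sigma sigmai : X -> X) (n : int)
  (f : X -> R[i]) : X -> R[i] := fun x => f (zpow sigma sigmai (- n) x).

(* A is a (complex, not necessarily unital) subalgebra of C(X). *)
Definition is_subalgebra_CX (R : realType) (X : topologicalType) (A : set (X -> R[i])) : Prop :=
  [/\ forall f, A f -> ccontinuous f,
      A (fun=> 0),
      forall f g, A f -> A g -> A (fun x => f x + g x),
      forall (c : R[i]) f, A f -> A (fun x => c * f x)
    & forall f g, A f -> A g -> A (fun x => f x * g x)].

(* Elements of the crossed product A x| Z: finitely supported maps Z -> A. *)
Definition supp (R : realType) (X : Type) (F : int -> X -> R[i]) : set int :=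
  [set n | F n <> (fun=> 0)].

Definition crossed (R : realType) (X : Type) (A : set (X -> R[i])) : set (int -> X -> R[i]) :=
  [set F | finite_set (supp F) /\ forall n, A (F n)].

(* Product in the crossed product:
   (sum_n F_n d^n) * (sum_m G_m d^m) = sum_k (sum_n F_n sigt^n(G_{k-n})) d^k. *)
Definition cp_mul (R : realType) (X : Type) (sigma sigmai : X -> X)
  (F G : int -> X -> R[i]) : int -> X -> R[i] :=
  fun k x => \sum_(n \in supp F) F n x * sigt_pow sigma sigmai n (G (k - n)) x.

Definition cp_add (R : realType) (X : Type) (F G : int -> X -> R[i]) : int -> X -> R[i] :=
  fun k x => F k x + G k x.

Definition cp_scale (R : realType) (X : Type) (c : R[i]) (F : int -> X -> R[i]) :
  int -> X -> R[i] := fun k x => c * F k x.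

Definition cp_zero (R : realType) (X : Type) : int -> X -> R[i] := fun _ _ => 0.

Definition cp_subalgebra (R : realType) (X : Type) (sigma sigmai : X -> X)
  (B S : set (int -> X -> R[i])) : Prop :=
  [/\ S `<=` B, S (@cp_zero R X),
      forall F G, S F -> S G -> S (cp_add F G),
      forall c F, S F -> S (cp_scale c F)
    & forall F G, S F -> S G -> S (cp_mul sigma sigmai F G)].

Definition cp_commutative (R : realType) (X : Type) (sigma sigmai : X -> X)
  (S : set (int -> X -> R[i])) : Prop :=
  forall F G, S F -> S G -> cp_mul sigma sigmai F G = cp_mul sigma sigmai G F.

Definition maximal_abelian (R : realType) (X : Type) (sigma sigmai : X -> X)
  (B S : set (int -> X -> R[i])) : Prop :=
  [/\ cp_subalgebra sigma sigmai B S, cp_commutative sigma sigmai S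
    & forall T, cp_subalgebra sigma sigmai B T -> cp_commutative sigma sigmai T ->
        S `<=` T -> T = S].

(* The canonical copy of A in the crossed product: elements f d^0. *)
Definition embA (R : realType) (X : Type) (A : set (X -> R[i])) : set (int -> X -> R[i]) :=
  [set F | A (F 0) /\ forall n, n != 0 -> F n = (fun=> 0)].

Definition Per_infty (X : Type) (sigma sigmai : X -> X) : set X :=
  [set x | forall n : int, n != 0 -> zpow sigma sigmai n x <> x].

(* Main.v *)
Require Import Defs.
From HB Require Import structures.
From mathcomp Require Import all_boot all_order all_algebra.
From mathcomp Require Import all_classical all_reals all_analysis.
From mathcomp Require Import complex.
Import Order.TTheory GRing.Theory Num.Theory.
Import numFieldTopology.Exports.
Local Open Scope ring_scope.
Local Open Scope classical_set_scope.
From mathcomp Require Import zify.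
Set Implicit Arguments. Unset Strict Implicit. Unset Printing Implicit Defensive.
Lemma iter_can (T : Type) (f g : T -> T) k : cancel f g -> cancel (iter k f) (iter k g).
Proof. move=> fK; elim: k => [//|k IH] x; by rewrite iterSr iterS fK IH. Qed.

Lemma zpowS (X : Type) (sigma sigmai : X -> X) : cancel sigmai sigma ->
  forall n x, zpow sigma sigmai (n + 1) x = sigma (zpow sigma sigmai n x).
Proof.
move=> K [k|[|k]] x.
- by have -> : (Posz k + 1 = Posz k.+1)%R by lia.
- by rewrite /= K.
- have -> : (Negz k.+1 + 1 = Negz k)%R by lia.
  by rewrite /= K.
Qed.

Lemma zpowP (X : Type) (sigma sigmai : X -> X) : cancel sigmai sigma -> cancel sigma sigmai ->
  forall n x, zpow sigma sigmai (n - 1) x = sigmai (zpow sigma sigmai n x).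
Proof.
move=> K K' n x; by rewrite -{2}(subrK 1 n) zpowS // K'.
Qed.

Lemma zpow_addP (X : Type) (sigma sigmai : X -> X) : cancel sigmai sigma -> cancel sigma sigmai ->
  forall (k : nat) b x, zpow sigma sigmai (k%:Z + b) x = iter k sigma (zpow sigma sigmai b x).
Proof.
move=> K K'; elim=> [|k IH] b x; first by rewrite add0r.
rewrite (_ : (k.+1)%:Z = k%:Z + 1); last by lia.
by rewrite addrAC zpowS // IH.
Qed.

Lemma zpow_addN (X : Type) (sigma sigmai : X -> X) : cancel sigmai sigma -> cancel sigma sigmai ->
  forall (k : nat) b x, zpow sigma sigmai (- k%:Z + b) x = iter k sigmai (zpow sigma sigmai b x).
Proof.
move=> K K'; elim=> [|k IH] b x.
  by rewrite /= oppr0 add0r.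
rewrite (_ : (k.+1)%:Z = k%:Z + 1); last by lia.
by rewrite opprD addrAC zpowP // IH.
Qed.



Lemma zpow_add (X : Type) (sigma sigmai : X -> X) : cancel sigmai sigma -> cancel sigma sigmai ->
  forall a b x, zpow sigma sigmai (a + b) x = zpow sigma sigmai a (zpow sigma sigmai b x).
Proof.
move=> K K' a b x.
have : (exists k : nat, a = k%:Z) \/ (exists k : nat, a = - k%:Z).
  case: a => k; [left|right]; first by exists k.
  by exists k.+1; rewrite NegzE.
case=> [[k ->]|[k ->]].
- by rewrite zpow_addP.
- by rewrite zpow_addN // -[in RHS](addr0 (- k%:Z)) zpow_addN.
Qed.

Lemma zpowNK (X : Type) (sigma sigmai : X -> X) : cancel sigmai sigma -> cancel sigma sigmai ->
  forall n x, zpow sigma sigmai (- n) (zpow sigma sigmai n x) = x.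
Proof. by move=> K K' n x; rewrite -zpow_add // addNr. Qed.

Lemma zpow_fixN (X : Type) (sigma sigmai : X -> X) : cancel sigmai sigma -> cancel sigma sigmai ->
  forall n x, zpow sigma sigmai n x = x -> zpow sigma sigmai (- n) x = x.
Proof. by move=> K K' n x H; rewrite -{1}H zpowNK. Qed.

Lemma iter_cont (X : topologicalType) (sigma : X -> X) : continuous sigma ->
  forall m, continuous (iter m sigma).
Proof.
move=> Hs; elim=> [|m IH] x; first exact: cvg_id.
exact: (@continuous_comp _ _ _ (iter m sigma) sigma x (IH x) (Hs _)).
Qed.

Lemma open_neqf (R : realType) (T : topologicalType) (p q : T -> R) :
  continuous p -> continuous q -> open [set y | p y != q y].
Proof.
move=> cp cq.
have -> : [set y | p y != q y] = (fun y => p y - q y) @^-1` [set r | r != 0].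
  by apply/seteqP; split=> y /=; rewrite subr_eq0.
apply: open_comp; last exact: open_neq.
move=> z _; apply: cvgB; [exact: cp|exact: cq].
Qed.

Lemma complex_eq0 (R : realType) (z : R[i]) : complex.Re z = 0 -> complex.Im z = 0 -> z = 0.
Proof. by case: z => a b /= -> ->. Qed.

Lemma dense_zeroR (R : realType) (X : topologicalType) (D : set X) (p : X -> R) :
  dense D -> continuous p -> (forall x, D x -> p x = 0) -> forall y, p y = 0.
Proof.
move=> Dd cp H y; apply: contrapT => /eqP py.
have Oop := @open_neqf R X p (fun=> 0) cp (@cst_continuous X R 0).
have [z [/= Oz Dz]] := Dd _ (ex_intro _ y py) Oop.
by move: Oz; rewrite H // eqxx.
Qed.

Lemma dense_zero (R : realType) (X : topologicalType) (D : set X) (f : X -> R[i]) :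
  dense D -> ccontinuous f -> (forall x, D x -> f x = 0) -> f = fun=> 0.
Proof.
move=> Dd [cr ci] H; apply/funext => y; apply: complex_eq0.
- by apply: (dense_zeroR Dd cr) => x Dx; rewrite H.
- by apply: (dense_zeroR Dd ci) => x Dx; rewrite H.
Qed.

Lemma A_sigt (R : realType) (X : Type) (sigma sigmai : X -> X) (A : set (X -> R[i])) :
  (forall f, A f -> A (sigt_pow sigma sigmai 1 f)) ->
  (forall f, A f -> A (sigt_pow sigma sigmai (-1) f)) ->
  forall n f, A f -> A (sigt_pow sigma sigmai n f).
Proof.
move=> H1 H2.
have hS : forall k f, A f -> A (fun x => f (iter k sigma x)).
  elim=> [|k IH] f Af; first exact: Af.
  have := H2 _ (IH f Af).
  have -> : sigt_pow sigma sigmai (-1) (fun x => f (iter k sigma x)) =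
            fun x => f (iter k.+1 sigma x).
    apply/funext => x; exact: (congr1 f (esym (iterSr k sigma x))).
  done.
have hSi : forall k f, A f -> A (fun x => f (iter k.+1 sigmai x)).
  elim=> [|k IH] f Af; first exact: (H1 _ Af).
  have := H1 _ (IH f Af).
  have -> : sigt_pow sigma sigmai 1 (fun x => f (iter k.+1 sigmai x)) =
            fun x => f (iter k.+2 sigmai x).
    apply/funext => x; exact: (congr1 f (esym (iterSr k.+1 sigmai x))).
  done.
move=> n f Af; rewrite /sigt_pow; case: (- n) => k /=; [exact: hS | exact: hSi].
Qed.

Lemma sum_in_A (R : realType) (X : Type) (A : set (X -> R[i])) :
  A (fun=> 0) -> (forall f g, A f -> A g -> A (fun x => f x + g x)) ->
  forall (I : Type) (s : seq I) (h : I -> X -> R[i]), (forall i, A (h i)) ->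
  A (fun x => \sum_(i <- s) h i x).
Proof.
move=> A0 Aadd I s h Ah; elim: s => [|a s IH].
  have -> : (fun x => \sum_(i <- [::]) h i x) = fun=> 0.
    by apply/funext => x; rewrite big_nil.
  done.
have -> : (fun x => \sum_(i <- a :: s) h i x) = fun x => h a x + \sum_(i <- s) h i x.
  by apply/funext => x; rewrite big_cons.
exact: Aadd.
Qed.

Lemma crossed_mul (R : realType) (X : Type) (sigma sigmai : X -> X) (A : set (X -> R[i])) :
  A (fun=> 0) -> (forall f g, A f -> A g -> A (fun x => f x + g x)) ->
  (forall f g, A f -> A g -> A (fun x => f x * g x)) ->
  (forall n f, A f -> A (sigt_pow sigma sigmai n f)) ->
  forall F G, crossed A F -> crossed A G -> crossed A (cp_mul sigma sigmai F G).
Proof.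
move=> A0 Aadd Amul AinvS F G [Ffin FA] [Gfin GA]; split.
- apply: (sub_finite_set _ (finite_image (fun p => p.1 + p.2) (finite_setX Ffin Gfin))).
  move=> k /= Hk; apply: contrapT => Hn; apply: Hk.
  apply/funext => x; rewrite /cp_mul; apply: fsbig1 => n Fn.
  have -> : G (k - n) = fun=> 0.
    apply: contrapT => Gn; apply: Hn; exists (n, k - n); first by split.
    by rewrite /= addrC subrK.
  by rewrite /sigt_pow mulr0.
- move=> k.
  have -> : cp_mul sigma sigmai F G k = fun x => \sum_(n <- finmap.enum_fset (fset_set (supp F)))
       F n x * sigt_pow sigma sigmai n (G (k - n)) x.
    by apply/funext => x; rewrite /cp_mul fsbig_finite.
  apply: (sum_in_A A0 Aadd) => n; apply: Amul => //; exact: AinvS.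
Qed.

Lemma C_mul_fix (R : realType) (X : Type) (sigma sigmai : X -> X) :
  cancel sigmai sigma -> cancel sigma sigmai ->
  forall (F G : int -> X -> R[i]),
  (forall k x, zpow sigma sigmai k x <> x -> F k x = 0) ->
  (forall k x, zpow sigma sigmai k x <> x -> G k x = 0) ->
  forall k x, zpow sigma sigmai k x <> x -> cp_mul sigma sigmai F G k x = 0.
Proof.
move=> K K' F G HF HG k x hk; rewrite /cp_mul; apply: fsbig1 => n _.
have [Fn0|Fn] := eqVneq (F n x) 0; first by rewrite Fn0 mul0r.
have hn : zpow sigma sigmai n x = x by apply: contrapT => h; move: Fn; rewrite HF // eqxx.
rewrite /sigt_pow zpow_fixN // HG ?mulr0 // => h; apply: hk.
have -> : k = (k - n) + n by rewrite subrK.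
by rewrite zpow_add // hn h.
Qed.

Lemma C_sumT (R : realType) (X : Type) (sigma sigmai : X -> X) :
  cancel sigmai sigma -> cancel sigma sigmai ->
  forall (F G : int -> X -> R[i]),
  (forall k x, zpow sigma sigmai k x <> x -> F k x = 0) ->
  forall k x, cp_mul sigma sigmai F G k x = \sum_(n \in [set: int]) F n x * G (k - n) x.
Proof.
move=> K K' F G HF k x; rewrite /cp_mul.
rewrite (fsbig_widen (supp F) setT) //; last first.
  move=> n [_ /= nF]; have -> : F n = fun=> 0 by apply: contrapT.
  by rewrite /preimage /= mul0r.
apply: eq_fsbigr => n _.
have [Fn0|Fn] := eqVneq (F n x) 0; first by rewrite Fn0 !mul0r.
have hn : zpow sigma sigmai n x = x by apply: contrapT => h; move: Fn; rewrite HF // eqxx.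
by rewrite /sigt_pow zpow_fixN.
Qed.

Lemma C_comm (R : realType) (X : Type) (sigma sigmai : X -> X) :
  cancel sigmai sigma -> cancel sigma sigmai ->
  forall (F G : int -> X -> R[i]),
  (forall k x, zpow sigma sigmai k x <> x -> F k x = 0) ->
  (forall k x, zpow sigma sigmai k x <> x -> G k x = 0) ->
  cp_mul sigma sigmai F G = cp_mul sigma sigmai G F.
Proof.
move=> K K' F G HF HG; apply/funext => k; apply/funext => x.
rewrite !C_sumT //.
rewrite (reindex_fsbigT (fun m => k - m)); last exact: (inv_bij (subKr k)).
by apply: eq_fsbigr => m _; rewrite subKr mulrC.
Qed.

Lemma emb_fix (R : realType) (X : Type) (sigma sigmai : X -> X) (A : set (X -> R[i])) F :
  embA A F -> forall k x, zpow sigma sigmai k x <> x -> F k x = 0.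
Proof.
move=> [_ HF] k x hk; have [k0|k0] := eqVneq k 0.
  by exfalso; apply: hk; rewrite k0.
by rewrite HF.
Qed.

Lemma emb_crossed (R : realType) (X : Type) (A : set (X -> R[i])) F :
  A (fun=> 0) -> embA A F -> crossed A F.
Proof.
move=> A0 [F0 HF]; split.
  apply: (sub_finite_set _ (finite_set1 0)) => n /= Fn; apply: contrapT => n0; apply: Fn.
  by apply: HF; apply/eqP.
by move=> n; have [->|n0] := eqVneq n 0 => //; rewrite HF.
Qed.

Lemma cp_mul_embl (R : realType) (X : Type) (sigma sigmai : X -> X) (g : X -> R[i]) F k x :
  cp_mul sigma sigmai (fun n : int => if n == 0 then g else fun=> 0) F k x = g x * F k x.
Proof.
rewrite /cp_mul (fsbig_widen _ [set 0%R]) ?fsbig_set1.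
- by rewrite /sigt_pow subr0 oppr0 /=.
- move=> n /= Hn; apply: contrapT => /eqP n0; apply: Hn; by rewrite (negbTE n0).
- move=> n [/= n0 /contrapT /= Hn]; subst n; rewrite /preimage /=.
  have Hg : g = fun=> 0 := Hn.
  by rewrite Hg /= mul0r.
Qed.

Lemma cp_mul_embr (R : realType) (X : Type) (sigma sigmai : X -> X) (g : X -> R[i]) F k x :
  cp_mul sigma sigmai F (fun n : int => if n == 0 then g else fun=> 0) k x =
  F k x * g (zpow sigma sigmai (- k) x).
Proof.
rewrite /cp_mul (fsbig_widen (supp F) setT) //; last first.
  move=> n [_ nF]; rewrite /preimage /=.
  have -> : F n = fun=> 0 by apply: contrapT.
  by rewrite mul0r.
rewrite -(fsbig_widen [set k] setT) ?fsbig_set1 //.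
- by rewrite subrr eqxx.
- move=> n [_ nk]; rewrite /preimage /= (_ : (k - n == 0) = false) /sigt_pow ?mulr0 //.
  apply/negbTE; rewrite subr_eq0; apply/eqP => e; exact: nk (esym e).
Qed.

Lemma complex_ext (R : realType) (z w : R[i]) :
  complex.Re z = complex.Re w -> complex.Im z = complex.Im w -> z = w.
Proof. by case: z => a b; case: w => c d /= -> ->. Qed.

Lemma Gopen (R : realType) (X : topologicalType) (sigma : X -> X) (A : set (X -> R[i])) :
  continuous sigma -> (forall f, A f -> ccontinuous f) ->
  (forall x y : X, x <> y -> exists2 f, A f & f x <> f y) ->
  forall m, open [set y | iter m sigma y <> y].
Proof.
move=> Hs Acont Hsep m.
have -> : [set y | iter m sigma y <> y] = \bigcup_(f in A)
   ([set y | complex.Re (f (iter m sigma y)) != complex.Re (f y)] `|`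
    [set y | complex.Im (f (iter m sigma y)) != complex.Im (f y)]).
  apply/seteqP; split => y /=.
  - move=> hy; have [f Af fne] := Hsep _ _ hy; exists f => //=.
    have [e1|e1] := eqVneq (complex.Re (f (iter m sigma y))) (complex.Re (f y)); last by left.
    have [e2|e2] := eqVneq (complex.Im (f (iter m sigma y))) (complex.Im (f y)); last by right.
    by exfalso; apply: fne; apply: complex_ext.
  - by move=> [f Af [] /eqP ne e]; apply: ne; rewrite e.
apply: bigcup_open => f Af; have [cr ci] := Acont f Af.
apply: openU; apply: open_neqf => // y.
- exact: (continuous_comp (@iter_cont _ _ Hs m y) (cr _)).
- exact: (continuous_comp (@iter_cont _ _ Hs m y) (ci _)).
Qed.

Unset Implicit Arguments. Set Strict Implicit.

Theorem theorem3p7 (R : realType) (X : topologicalType) (sigma sigmai : X -> X)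
  (A : set (X -> R[i])) :
  baire_space X ->
  continuous sigma -> continuous sigmai ->
  cancel sigma sigmai -> cancel sigmai sigma ->
  is_subalgebra_CX A ->
  (forall f, A f -> A (sigt_pow sigma sigmai 1 f)) ->
  (forall f, A f -> A (sigt_pow sigma sigmai (-1) f)) ->
  (forall x y : X, x <> y -> exists2 f, A f & f x <> f y) ->
  (forall U : set X, open U -> U !=set0 ->
     exists2 f, A f & f <> (fun=> 0) /\ (forall x, ~ U x -> f x = 0)) ->
  (maximal_abelian sigma sigmai (crossed A) (embA A) <->
   dense (Per_infty sigma sigmai)).
Proof.
move=> Hbaire Hs Hsi K1 K2 HA Hp1 Hm1 Hsep Hloc.
have [Acont A0 Aadd Ascale Amul] := HA.
have AinvS := A_sigt Hp1 Hm1.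
have Cmul := crossed_mul A0 Aadd Amul AinvS.
pose C := [set F : int -> X -> R[i] | crossed A F /\
            forall k x, zpow sigma sigmai k x <> x -> F k x = 0].
have add_crossed : forall F G, crossed A F -> crossed A G -> crossed A (cp_add F G).
  move=> F G [Ff FA] [Gf GA]; split; last by move=> n; apply: Aadd.
  apply: (sub_finite_set _ (_ : finite_set (supp F `|` supp G))); last by rewrite finite_setU.
  move=> k Hk; case: (pselect (supp F k)) => [?|/contrapT Fk]; first by left.
  case: (pselect (supp G k)) => [?|/contrapT Gk]; first by right.
  by exfalso; apply: Hk; apply/funext => x; rewrite /cp_add /= Fk Gk addr0.
have scale_crossed : forall c F, crossed A F -> crossed A (cp_scale c F).
  move=> c F [Ff FA]; split; last by move=> n; apply: Ascale.
  apply: (sub_finite_set _ Ff) => k Hk Fk; apply: Hk; apply/funext => x.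
  by rewrite /cp_scale /= Fk mulr0.
have zero_crossed : crossed A (@cp_zero R X).
  split; last by move=> n; exact: A0.
  by apply: (sub_finite_set _ (finite_set0 _)) => k Hk; apply: Hk.
have Csub : cp_subalgebra sigma sigmai (crossed A) C.
  split.
  - by move=> F [].
  - by split; first exact: zero_crossed.
  - move=> F G [cF HF] [cG HG]; split; first exact: add_crossed.
    by move=> k x hk; rewrite /cp_add HF ?HG ?addr0.
  - move=> c F [cF HF]; split; first exact: scale_crossed.
    by move=> k x hk; rewrite /cp_scale HF ?mulr0.
  - move=> F G [cF HF] [cG HG]; split; first exact: Cmul.
    exact: C_mul_fix.
have Ccomm : cp_commutative sigma sigmai C by move=> F G [_ HF] [_ HG]; exact: C_comm.
have embC : embA A `<=` C.
  by move=> F hF; split; [exact: emb_crossed | exact: emb_fix hF].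
have embSub : cp_subalgebra sigma sigmai (crossed A) (embA A).
  split.
  - move=> F; exact: emb_crossed.
  - by split; [exact: A0 | by []].
  - move=> F G [F0 HF] [G0 HG]; split; first exact: Aadd.
    by move=> n n0; apply/funext => x; rewrite /cp_add /= HF // HG //= addr0.
  - move=> c F [F0 HF]; split; first exact: Ascale.
    by move=> n n0; apply/funext => x; rewrite /cp_scale /= HF //= mulr0.
  - move=> F G hF hG; have cFG := Cmul _ _ (emb_crossed A0 hF) (emb_crossed A0 hG).
    split; first exact: cFG.2.
    move=> n n0; apply/funext => x; rewrite /cp_mul; apply: fsbig1 => m Fm.
    have [m0|m0] := eqVneq m 0; last by exfalso; apply: Fm; exact: (proj2 hF) m m0.
    by rewrite m0 subr0 (proj2 hG n n0) /sigt_pow /= mulr0.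
have embComm : cp_commutative sigma sigmai (embA A).
  by move=> F G hF hG; apply: Ccomm; apply: embC.
split.
- move=> [_ _ Hmax] O O0 Oop; apply: contrapT => hnone.
  have [n [V [Vop V0 VO Vfix]]] : exists n : nat, exists V : set X,
      [/\ open V, V !=set0, V `<=` O & forall y, V y -> iter n.+1 sigma y = y].
    apply: contrapT => hno.
    pose E := \bigcup_(W in [set W : set X | open W /\ W `&` O = set0]) W.
    pose Fs := fun i : nat => [set y | iter i.+1 sigma y <> y] `|` E.
    have FsOD : forall i, open (Fs i) /\ dense (Fs i).
      move=> i; split.
        apply: openU; first exact: (Gopen Hs Acont Hsep).
        by apply: bigcup_open => W [].
      move=> W [w Ww] Wop.
      case: (pselect (W `&` O = set0)) => WO.
        by exists w; split => //; right; exists W.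
      have [y [[Wy Oy] hy]] : exists y, (W `&` O) y /\ iter i.+1 sigma y <> y.
        apply: contrapT => hall; apply: hno; exists i, (W `&` O); split.
        + exact: openI.
        + by apply/set0P/eqP.
        + by move=> z [].
        + move=> z Wz; apply: contrapT => hz; apply: hall; by exists z.
      by exists y; split => //; left.
    have [x [Ox Hx]] := Hbaire Fs FsOD O O0 Oop.
    apply: hnone; exists x; split => //.
    have nE : ~ E x.
      by move=> [W [_ WO] Wx]; have : (W `&` O) x by []; rewrite WO.
    have Hi : forall i, iter i.+1 sigma x <> x.
      by move=> i; case: (Hx i I) => [//|/nE []].
    move=> [[|k]|k] /= hk.
    + by [].
    + exact: Hi k.
    + move=> e; apply: (Hi k); rewrite -{1}e.
      exact: (@iter_can _ _ _ k.+1 K2 x).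
  have [f Af [fnz fV]] := Hloc V Vop V0.
  pose Fd := fun k : int => if k == n.+1%:Z then f else (fun _ : X => (0 : R[i])).
  have FdC : C Fd.
    split; first split.
    - apply: (sub_finite_set _ (finite_set1 n.+1%:Z)) => k /= Hk.
      apply: contrapT => kn; apply: Hk; by rewrite /Fd ifN //; apply/eqP.
    - by move=> k; rewrite /Fd; case: ifP.
    - move=> k x hk; rewrite /Fd; case: eqP => [ek|//]; subst k.
      apply: fV => Vx; exact: hk (Vfix x Vx).
  have CE := Hmax C Csub Ccomm embC.
  have : embA A Fd by rewrite -CE.
  case=> _ /(_ n.+1%:Z isT); rewrite /Fd eqxx; exact: fnz.
- move=> Hd; split => // T Tsub Tcomm embT.
  apply/seteqP; split => // F TF.
  have [TB _ _ _ _] := Tsub.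
  have [_ FA] := TB F TF.
  split => // k k0.
  apply: (dense_zero Hd (Acont _ (FA k))) => x Px.
  have hx : zpow sigma sigmai (- k) x <> x by apply: Px; rewrite oppr_eq0.
  have [g Ag gne] := Hsep _ _ hx.
  pose Fg := fun n : int => if n == 0 then g else (fun _ : X => (0 : R[i])).
  have embFg : embA A Fg.
    by split => [|m m0]; rewrite /Fg /= ?(negbTE m0).
  have := Tcomm Fg F (embT _ embFg) TF => /(congr1 (fun H => H k x)).
  rewrite cp_mul_embl cp_mul_embr => e.
  apply/eqP; apply: contrapT => /negP Fk; apply: gne.
  by apply: (mulfI Fk); rewrite /= -e mulrC.
Qed.
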